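(* Let $R$ be a reflexive relation on a set $U$ such that $\mathrm{DM(RS)}$ is completely distributive and spatial. The following are equivalent: (i) $\mathrm{DM(RS)}$ forms a Nelson algebra (with the operations described in the context); (ii) for all $x,y\in U\setminus\mathcal S$ such that $\{x\}^{\blacktriangle}$ and $\{y\}^{\blacktriangle}$ are completely join-irreducible in $\wp(U)^{\blacktriangle}$: if $\{x\}^{\blacktriangle},\{y\}^{\blacktriangle}\subseteq\{u\}^{\blacktriangle}$ for some $u\in U$, then there exists $z\in U$ such that $\{z\}^{\blacktriangle}$ is completely join-irreducible in $\wp(U)^{\blacktriangle}$ and $\{x\}^{\blacktriangle},\{y\}^{\blacktriangle}\subseteq\{z\}^{\blacktriangle}$.
   Context: Let $U$ be a set and $R\subseteq U\times U$ a binary relation. For $x\in U$, $R(x)=\{y\in U\mid (x,y)\in R\}$ and $\breve R(x)=\{y\in U\mid (y,x)\in R\}$ ($\breve R$ is the inverse relation). For $X\subseteq U$: $X^{\blacktriangledown}=\{x\in U\mid R(x)\subseteq X\}$, $X^{\blacktriangle}=\{x\in U\mid R(x)\cap X\neq\emptyset\}$, $X^{\triangledown}=\{x\in U\mid \breve R(x)\subseteq X\}$, $X^{\vartriangle}=\{x\in U\mid \breve R(x)\cap X\neq\emptyset\}$; thus $\{x\}^{\vartriangle}=R(x)$ and $\{x\}^{\blacktriangle}=\breve R(x)$, and composites such as $X^{\vartriangle\blacktriangledown}$ mean $(X^{\vartriangle})^{\blacktriangledown}$. Put $\wp(U)^{\blacktriangledown}=\{X^{\blacktriangledown}\mid X\subseteq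 U\}$ and similarly $\wp(U)^{\blacktriangle},\wp(U)^{\triangledown},\wp(U)^{\vartriangle}$; each is a complete lattice under $\subseteq$ (in $\wp(U)^{\blacktriangle}$ and $\wp(U)^{\vartriangle}$ joins are unions). The set of singletons is $\mathcal S=\{x\in U\mid |R(x)|=1\}$. $\mathrm{RS}=\{(X^{\blacktriangledown},X^{\blacktriangle})\mid X\subseteq U\}$ is ordered coordinatewise by inclusion, and $\mathrm{DM(RS)}$ is its Dedekind–MacNeille completion, which is (identified with) $\{(A,B)\in\wp(U)^{\blacktriangledown}\times\wp(U)^{\blacktriangle}\mid A^{\vartriangle\blacktriangle}\subseteq B,\ A\cap\mathcal S=B\cap\mathcal S\}$ ordered coordinatewise, with arbitrary meets $\bigwedge_i(X_i,Y_i)=(\bigcap_iX_i,(\bigcap_iY_i)^{\triangledown\blacktriangle})$ and joins $\bigvee_i(X_i,Y_i)=((\bigcup_iX_i)^{\vartriangle\blacktriangledown},\bigcup_iY_i)$. An element $j$ of a complete lattice $L$ is completely join-irreducible if $j=\bigvee S$ implies $j\in S$ for all $S\subseteq L$ (the least element is not completely join-irreducible). $L$ is spatial if each element is the join of the completely join-irreducible elements below it. For reflexive $R$ with $\mathrm{DM(RS)}$ distributive, $\mathrm{DM(RS)}$ is a Kleene algebra with $\sim(A,B)=(B^c,A^c)$ ($^c$ = complement in $U$), bottom $(\emptyset,\emptyset)$ and top $(U,U)$. A Kleene algebra is a bounded distributive lattice with an operation $\sim$ satisfying $\sim\sim x=x$, $\sim(x\vee y)=\sim x\wedge\sim y$,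 $\sim(x\wedge y)=\sim x\vee\sim y$ and $x\wedge\sim x\le y\vee\sim y$. A Nelson algebra is a Kleene algebra in which for all $a,b$ the element $a\to b:=a\Rightarrow(\sim a\vee b)$ exists ($\Rightarrow$ the relative pseudocomplement: $a\Rightarrow c$ is the greatest $x$ with $a\wedge x\le c$) and $(a\wedge b)\to c=a\to(b\to c)$ for all $a,b,c$. ''$\mathrm{DM(RS)}$ forms a Nelson algebra'' means that the Kleene algebra $(\mathrm{DM(RS)},\vee,\wedge,\sim,(\emptyset,\emptyset),(U,U))$ with this $\to$ is a Nelson algebra. *)

(* Defs.v *)
From HB Require Import structures.
From mathcomp Require Import all_boot.
From mathcomp Require Export boolp classical_sets.
Set Implicit Arguments. Unset Strict Implicit. Unset Printing Implicit Defensive.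
Local Open Scope classical_set_scope.

Definition Rimg (U : Type) (R : U -> U -> Prop) (x : U) : set U := [set y | R x y].
Definition Rinv (U : Type) (R : U -> U -> Prop) (x : U) : set U := [set y | R y x].

(* X^{black down}  = {x | R(x) ⊆ X} *)
Definition ubox (U : Type) (R : U -> U -> Prop) (X : set U) : set U :=
  [set x | Rimg R x `<=` X].
(* X^{black up}    = {x | R(x) ∩ X ≠ ∅} *)
Definition udia (U : Type) (R : U -> U -> Prop) (X : set U) : set U :=
  [set x | Rimg R x `&` X !=set0].
(* X^{white down}  = {x | R˘(x) ⊆ X} *)
Definition ibox (U : Type) (R : U -> U -> Prop) (X : set U) : set U :=
  [set x | Rinv R x `<=` X].
(* X^{white up}    = {x | R˘(x) ∩ X ≠ ∅} *)
Definition idia (U : Type) (R : U -> U -> Prop) (X : set U) : set U :=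
  [set x | Rinv R x `&` X !=set0].

Definition singletons (U : Type) (R : U -> U -> Prop) : set U :=
  [set x | exists y, Rimg R x = [set y]].

Definition DMRS (U : Type) (R : U -> U -> Prop) : set (set U * set U) :=
  [set p | range (ubox R) p.1 /\ range (udia R) p.2 /\
           udia R (idia R p.1) `<=` p.2 /\
           p.1 `&` singletons R = p.2 `&` singletons R].

Definition pair_le (U : Type) (p q : set U * set U) : Prop :=
  p.1 `<=` q.1 /\ p.2 `<=` q.2.

Definition dm_join (U : Type) (R : U -> U -> Prop) (p q : set U * set U) :=
  (ubox R (idia R (p.1 `|` q.1)), p.2 `|` q.2).
Definition dm_meet (U : Type) (R : U -> U -> Prop) (p q : set U * set U) :=
  (p.1 `&` q.1, udia R (ibox R (p.2 `&` q.2))).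
Definition dm_neg (U : Type) (p : set U * set U) : set U * set U :=
  (~` p.2, ~` p.1).
Definition dm_bot (U : Type) : set U * set U := (set0, set0).
Definition dm_top (U : Type) : set U * set U := (setT, setT).

Definition is_ub (T : Type) (le : T -> T -> Prop) (S : set T) (u : T) :=
  forall s, S s -> le s u.
Definition is_lb (T : Type) (le : T -> T -> Prop) (S : set T) (u : T) :=
  forall s, S s -> le u s.
Definition is_lub (T : Type) (L : set T) (le : T -> T -> Prop) (S : set T) (j : T) :=
  L j /\ is_ub le S j /\ forall u, L u -> is_ub le S u -> le j u.
Definition is_glb (T : Type) (L : set T) (le : T -> T -> Prop) (S : set T) (j : T) :=
  L j /\ is_lb le S j /\ forall u, L u -> is_lb le S u -> le u j.

Definition cji (T : Type) (L : set T) (le : T -> T -> Prop) (j : T) :=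
  L j /\ forall S : set T, S `<=` L -> is_lub L le S j -> S j.

Definition spatial (T : Type) (L : set T) (le : T -> T -> Prop) :=
  forall a, L a -> is_lub L le [set j | cji L le j /\ le j a] a.

(* complete distributivity:
   /\_i \/_{k in K i} x i k = \/_{f in prod_i K i} /\_i x i (f i) *)
Definition completely_distributive (T : Type) (L : set T) (le : T -> T -> Prop) :=
  forall (I : Type) (K : I -> Type) (x : forall i, K i -> T)
         (y : I -> T) (a : T) (z : (forall i, K i) -> T) (b : T),
    (forall i k, L (x i k)) ->
    (forall i, is_lub L le [set t | exists k, t = x i k] (y i)) ->
    is_glb L le [set t | exists i, t = y i] a ->
    (forall f, is_glb L le [set t | exists i, t = x i (f i)] (z f)) ->
    is_lub L le [set t | exists f, t = z f] b ->
    a = b.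

Definition is_Kleene_DM (U : Type) (R : U -> U -> Prop) : Prop :=
  let L := DMRS R in
  let le := @pair_le U in
  let j := dm_join R in let m := dm_meet R in let n := @dm_neg U in
  L (dm_bot U) /\ L (dm_top U) /\
  (forall a, L a -> le (dm_bot U) a /\ le a (dm_top U)) /\
  (forall a b, L a -> L b -> is_lub L le [set a; b] (j a b)) /\
  (forall a b, L a -> L b -> is_glb L le [set a; b] (m a b)) /\
  (forall a b c, L a -> L b -> L c -> m a (j b c) = j (m a b) (m a c)) /\
  (forall a, L a -> L (n a)) /\
  (forall a, L a -> n (n a) = a) /\
  (forall a b, L a -> L b -> n (j a b) = m (n a) (n b)) /\
  (forall a b, L a -> L b -> n (m a b) = j (n a) (n b)) /\
  (forall a b, L a -> L b -> le (m a (n a)) (j b (n b))).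

Definition is_rpc (U : Type) (R : U -> U -> Prop) (a c x : set U * set U) : Prop :=
  DMRS R x /\ pair_le (dm_meet R a x) c /\
  forall y, DMRS R y -> pair_le (dm_meet R a y) c -> pair_le y x.

(* a -> b := a => (~a \/ b) exists for all a b, and (a/\b) -> c = a -> (b -> c) *)
Definition is_Nelson_DM (U : Type) (R : U -> U -> Prop) : Prop :=
  is_Kleene_DM R /\
  (forall a b, DMRS R a -> DMRS R b ->
     exists x, is_rpc R a (dm_join R (dm_neg a) b) x) /\
  (forall a b c u v w, DMRS R a -> DMRS R b -> DMRS R c ->
     is_rpc R (dm_meet R a b) (dm_join R (dm_neg (dm_meet R a b)) c) u ->
     is_rpc R b (dm_join R (dm_neg b) c) v ->
     is_rpc R a (dm_join R (dm_neg a) v) w ->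
     u = w).

(* Main.v *)
Require Import Defs.
From mathcomp Require Import all_boot boolp classical_sets.
Local Open Scope classical_set_scope.
Set Implicit Arguments. Unset Strict Implicit.

Lemma NNP (P : Prop) : ~ ~ P -> P.
Proof. by move=> h; apply/not_notP. Qed.

Lemma seteq (U : Type) (A B : set U) : A `<=` B -> B `<=` A -> A = B.
Proof. by move=> h1 h2; rewrite eqEsubset; split. Qed.

Lemma paireq (U : Type) (p q : set U * set U) : pair_le p q -> pair_le q p -> p = q.
Proof.
case: p => a b; case: q => c d [/= h1 h2] [/= h3 h4].
by rewrite (seteq h1 h3) (seteq h2 h4).
Qed.

Lemma le_refl (U : Type) (p : set U * set U) : pair_le p p.
Proof. by split. Qed.

Lemma le_trans (U : Type) (p q r : set U * set U) : pair_le p q -> pair_le q r -> pair_le p r.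
Proof. move=> [h1 h2] [h3 h4]; split => t ht; [exact: h3 (h1 _ ht)| exact: h4 (h2 _ ht)]. Qed.

Lemma ubox_mono U (R : U -> U -> Prop) (X Y : set U) : X `<=` Y -> ubox R X `<=` ubox R Y.
Proof. move=> h x hx y hy; exact: h (hx y hy). Qed.
Lemma udia_mono U (R : U -> U -> Prop) (X Y : set U) : X `<=` Y -> udia R X `<=` udia R Y.
Proof. move=> h x [y [h1 h2]]; exists y; split => //; exact: h. Qed.
Lemma ibox_mono U (R : U -> U -> Prop) (X Y : set U) : X `<=` Y -> ibox R X `<=` ibox R Y.
Proof. move=> h x hx y hy; exact: h (hx y hy). Qed.
Lemma idia_mono U (R : U -> U -> Prop) (X Y : set U) : X `<=` Y -> idia R X `<=` idia R Y.
Proof. move=> h x [y [h1 h2]]; exists y; split => //; exact: h. Qed.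


Lemma ubox_sub U (R : U -> U -> Prop) (refl : forall x, R x x) (X : set U) : ubox R X `<=` X.
Proof. move=> x hx; exact: hx x (refl x). Qed.
Lemma sub_udia U (R : U -> U -> Prop) (refl : forall x, R x x) (X : set U) : X `<=` udia R X.
Proof. move=> x hx; exists x; split => //; exact: refl. Qed.
Lemma ibox_sub U (R : U -> U -> Prop) (refl : forall x, R x x) (X : set U) : ibox R X `<=` X.
Proof. move=> x hx; exact: hx x (refl x). Qed.
Lemma sub_idia U (R : U -> U -> Prop) (refl : forall x, R x x) (X : set U) : X `<=` idia R X.
Proof. move=> x hx; exists x; split => //; exact: refl. Qed.

Lemma idia_ubox U (R : U -> U -> Prop) (X : set U) : idia R (ubox R X) `<=` X.
Proof. move=> x [y [h1 h2]]; exact: h2 x h1. Qed.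
Lemma ubox_idia U (R : U -> U -> Prop) (X : set U) : X `<=` ubox R (idia R X).
Proof. move=> x hx y hy; exists x; split => //. Qed.
Lemma udia_ibox U (R : U -> U -> Prop) (X : set U) : udia R (ibox R X) `<=` X.
Proof. move=> x [y [h1 h2]]; exact: h2 x h1. Qed.
Lemma ibox_udia U (R : U -> U -> Prop) (X : set U) : X `<=` ibox R (udia R X).
Proof. move=> x hx y hy; exists x; split => //. Qed.

Lemma range_ubox U (R : U -> U -> Prop) (A : set U) : range (ubox R) A -> ubox R (idia R A) = A.
Proof.
move=> [X _ <-]; apply: seteq; last exact: ubox_idia.
apply: ubox_mono; exact: idia_ubox.
Qed.
Lemma range_udia U (R : U -> U -> Prop) (B : set U) : range (udia R) B -> udia R (ibox R B) = B.
Proof.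
move=> [X _ <-]; apply: seteq; first exact: udia_ibox.
apply: udia_mono; exact: ibox_udia.
Qed.
Lemma range_ubox_i U (R : U -> U -> Prop) (A : set U) : range (ubox R) A -> ubox R (idia R A) `<=` A.
Proof. by move=> h; rewrite range_ubox. Qed.
Lemma range_udia_i U (R : U -> U -> Prop) (B : set U) : range (udia R) B -> B `<=` udia R (ibox R B).
Proof. by move=> h; rewrite range_udia. Qed.

Lemma C_ubox U (R : U -> U -> Prop) (X : set U) : ~` ubox R X = udia R (~` X).
Proof.
apply: seteq => x /=.
  move=> h; apply: NNP => h2; apply: h => y hy; apply: NNP => hy2; apply: h2; by exists y.
by move=> [y [h1 h2]] h3; apply: h2; exact: h3 y h1.
Qed.
Lemma C_udia U (R : U -> U -> Prop) (X : set U) : ~` udia R X = ubox R (~` X).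
Proof.
apply: seteq => x /=.
  by move=> h y hy hX; apply: h; exists y.
by move=> h [y [h1 h2]]; exact: h y h1 h2.
Qed.
Lemma C_idia U (R : U -> U -> Prop) (X : set U) : ~` idia R X = ibox R (~` X).
Proof.
apply: seteq => x /=.
  by move=> h y hy hX; apply: h; exists y.
by move=> h [y [h1 h2]]; exact: h y h1 h2.
Qed.
Lemma C_ibox U (R : U -> U -> Prop) (X : set U) : ~` ibox R X = idia R (~` X).
Proof.
apply: seteq => x /=.
  move=> h; apply: NNP => h2; apply: h => y hy; apply: NNP => hy2; apply: h2; by exists y.
by move=> [y [h1 h2]] h3; apply: h2; exact: h3 y h1.
Qed.

Lemma S_img U (R : U -> U -> Prop) (refl : forall x, R x x) x :
  singletons R x -> forall y, R x y -> y = x.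
Proof.
move=> [z hz] y hy.
have hx : Rimg R x x by exact: refl.
have hy' : Rimg R x y by [].
rewrite hz in hx hy'. have e1 : y = z := hy'. have e2 : x = z := hx. by rewrite e1 e2.
Qed.
Lemma S_intro U (R : U -> U -> Prop) (refl : forall x, R x x) x :
  (forall y, R x y -> y = x) -> singletons R x.
Proof.
move=> h; exists x; apply: seteq => y /=; first exact: h.
move=> ->; exact: refl.
Qed.
Lemma ubox1 U (R : U -> U -> Prop) (refl : forall x, R x x) z t :
  ubox R [set z] t -> t = z /\ singletons R z.
Proof.
move=> h; have e : t = z by exact: h t (refl t).
split => //; apply: S_intro => // y hy; subst t; exact: h y hy.
Qed.
Lemma ubox1_S U (R : U -> U -> Prop) (refl : forall x, R x x) z :
  singletons R z -> ubox R [set z] z.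
Proof. move=> h y hy; exact: S_img h y hy. Qed.
Lemma udia1 U (R : U -> U -> Prop) z w : udia R [set z] w <-> R w z.
Proof. split; [move=> [y [h e]]; have e' : y = z := e; by rewrite -e' | by move=> h; exists z]. Qed.

Definition JJ U (R : U -> U -> Prop) := cji (DMRS R) (@pair_le U).
Definition Pe U (R : U -> U -> Prop) (x : U) : set U * set U :=
  (ubox R (Rimg R x), udia R (Rimg R x)).
Definition Ee U (R : U -> U -> Prop) (z : U) : set U * set U :=
  (ubox R [set z], udia R [set z]).
Definition U1 U (F : set (set U * set U)) : set U := [set t | exists p, F p /\ p.1 t].
Definition U2 U (F : set (set U * set U)) : set U := [set t | exists p, F p /\ p.2 t].
Definition BJ U (R : U -> U -> Prop) (F : set (set U * set U)) : set U * set U :=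
  (ubox R (idia R (U1 F)), U2 F).
Definition cjiD U (R : U -> U -> Prop) (z : U) :=
  cji (range (udia R)) (@subset U) (udia R [set z]).

Lemma L_sub U (R : U -> U -> Prop) (refl : forall x, R x x) p :
  DMRS R p -> p.1 `<=` p.2.
Proof.
move=> [_ [_ [h _]]] x hx; apply: h; apply: sub_udia => //; exact: sub_idia.
Qed.

Lemma L_S U (R : U -> U -> Prop) p x :
  DMRS R p -> singletons R x -> p.2 x -> p.1 x.
Proof.
move=> [_ [_ [_ e]]] hs h2.
have : (p.2 `&` singletons R) x by split.
by rewrite -e => -[].
Qed.

Lemma L_intro U (R : U -> U -> Prop) (refl : forall x, R x x) (A B : set U) :
  range (ubox R) A -> range (udia R) B -> udia R (idia R A) `<=` B ->
  (forall x, singletons R x -> B x -> A x) -> DMRS R (A, B).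
Proof.
move=> h1 h2 h3 h4; split => //; split => //; split => //=.
apply: seteq => x [hx hs]; split => //.
  apply: h3; apply: sub_udia => //; exact: sub_idia.
exact: h4.
Qed.

Lemma rng_ubox U (R : U -> U -> Prop) X : range (ubox R) (ubox R X).
Proof. by exists X. Qed.
Lemma rng_udia U (R : U -> U -> Prop) X : range (udia R) (udia R X).
Proof. by exists X. Qed.

Lemma Pe_L U (R : U -> U -> Prop) (refl : forall x, R x x) x : DMRS R (Pe R x).
Proof.
apply: (L_intro refl); [exact: rng_ubox | exact: rng_udia | |].
  apply: udia_mono; exact: idia_ubox.
move=> y hs [t [h1 h2]]; have e := S_img refl hs h1; subst t.
move=> s hs2; have e := S_img refl hs hs2; subst s; exact: h2.
Qed.

Lemma Ee_L U (R : U -> U -> Prop) (refl : forall x, R x x) z : DMRS R (Ee R z).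
Proof.
apply: (L_intro refl); [exact: rng_ubox | exact: rng_udia | |].
  apply: udia_mono; exact: idia_ubox.
move=> y hs /udia1 h; have e := S_img refl hs h; subst z.
exact: ubox1_S.
Qed.

Lemma neg_L U (R : U -> U -> Prop) (refl : forall x, R x x) p :
  DMRS R p -> DMRS R (dm_neg p).
Proof.
move=> hp; have hsub := L_sub refl hp.
case: (hp) => -[X _ eA] [[Y _ eB] [h3 h4]].
rewrite /dm_neg; apply: (L_intro refl).
- exists (~` Y) => //; by rewrite -C_udia eB.
- exists (~` X) => //; by rewrite -C_ubox eA.
- move=> x [y [hxy [w [hyw hw]]]] hx.
  apply: hw; apply: h3; exists y; split => //; exists x; split => //.
- move=> x hs /= hx hx2; apply: hx; exact: L_S hp hs hx2.
Qed.

Lemma negK U (p : set U * set U) : dm_neg (dm_neg p) = p.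
Proof. by case: p => a b; rewrite /dm_neg /= !setCK. Qed.

Lemma neg_anti U (p q : set U * set U) : pair_le p q -> pair_le (dm_neg q) (dm_neg p).
Proof. by move=> [h1 h2]; split => x /= hx hy; apply: hx; [exact: h2 | exact: h1]. Qed.

Lemma bot_L U (R : U -> U -> Prop) (refl : forall x, R x x) : DMRS R (dm_bot U).
Proof.
rewrite /dm_bot; apply: (L_intro refl).
- exists set0 => //; apply: seteq => x // hx; exact: hx x (refl x).
- exists set0 => //; apply: seteq => x // [y [_ []]].
- by move=> x [y [_ [w [_ []]]]].
- by move=> x _ [].
Qed.

Lemma top_L U (R : U -> U -> Prop) (refl : forall x, R x x) : DMRS R (dm_top U).
Proof.
rewrite /dm_top; apply: (L_intro refl).
- exists setT => //; apply: seteq => x // _ y _; done.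
- exists setT => //; apply: seteq => x // _; by exists x; split.
- by move=> x _.
- by move=> x _ _.
Qed.

Lemma U2_rng U (R : U -> U -> Prop) F : F `<=` DMRS R -> range (udia R) (U2 F).
Proof.
move=> hF; exists (ibox R (U2 F)) => //; apply: seteq; first exact: udia_ibox.
move=> x [p [hp hx]].
have [_ [hr _]] := hF p hp.
have : udia R (ibox R p.2) x by rewrite range_udia.
apply: udia_mono; apply: ibox_mono => y hy; by exists p.
Qed.

Lemma BJ_L U (R : U -> U -> Prop) (refl : forall x, R x x) F : F `<=` DMRS R -> DMRS R (BJ R F).
Proof.
move=> hF; apply: (L_intro refl); [exact: rng_ubox | exact: U2_rng | |].
- move=> x [y [hxy hy]].
  have := idia_ubox hy => -[w [hwy [p [hp hw]]]].
  exists p; split => //.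
  have [_ [_ [h3 _]]] := hF p hp.
  apply: h3; exists y; split => //; by exists w.
- move=> x hs [p [hp hx]].
  apply: ubox_idia; exists p; split => //; exact: L_S (hF p hp) hs hx.
Qed.

Lemma BJ_lub U (R : U -> U -> Prop) (refl : forall x, R x x) F :
  F `<=` DMRS R -> is_lub (DMRS R) (@pair_le U) F (BJ R F).
Proof.
move=> hF; split; first exact: BJ_L.
split.
  move=> p hp; split => x hx /=; last by exists p.
  apply: ubox_idia; by exists p.
move=> u hu hub; split => x /=.
  move=> hx; rewrite -(range_ubox hu.1).
  apply: ubox_mono hx; apply: idia_mono => y [p [hp hy]]; exact: (hub p hp).1 y hy.
move=> [p [hp hx]]; exact: (hub p hp).2 x hx.
Qed.

Lemma lub_uniq T (L : set T) (le : T -> T -> Prop) (anti : forall p q, le p q -> le q p -> p = q) F m m' :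
  is_lub L le F m -> is_lub L le F m' -> m = m'.
Proof.
move=> [h1 [h2 h3]] [h1' [h2' h3']]; apply: anti; [exact: h3 | exact: h3'].
Qed.

Lemma lub_BJ U (R : U -> U -> Prop) (refl : forall x, R x x) F m :
  F `<=` DMRS R -> is_lub (DMRS R) (@pair_le U) F m -> m = BJ R F.
Proof. move=> hF hm; apply: lub_uniq hm (BJ_lub refl hF); exact: paireq. Qed.

Lemma join_BJ U (R : U -> U -> Prop) a b :
  dm_join R a b = BJ R [set a; b].
Proof.
rewrite /dm_join /BJ; congr (_, _).
  congr (ubox R (idia R _)); apply: seteq => x.
    move=> [hx|hx]; [exists a | exists b]; split => //; by [left | right].
  by move=> [p [[->|->] hx]]; [left | right].
apply: seteq => x.
  move=> [hx|hx]; [exists a | exists b]; split => //; by [left | right].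
by move=> [p [[->|->] hx]]; [left | right].
Qed.

Lemma pair_sub U (R : U -> U -> Prop) a b : DMRS R a -> DMRS R b -> [set a; b] `<=` DMRS R.
Proof. by move=> ha hb p [->|->]. Qed.

Lemma join_lub U (R : U -> U -> Prop) (refl : forall x, R x x) a b :
  DMRS R a -> DMRS R b -> is_lub (DMRS R) (@pair_le U) [set a; b] (dm_join R a b).
Proof. move=> ha hb; rewrite join_BJ; apply: BJ_lub => //; exact: pair_sub. Qed.

Lemma join_L U (R : U -> U -> Prop) (refl : forall x, R x x) a b :
  DMRS R a -> DMRS R b -> DMRS R (dm_join R a b).
Proof. by move=> ha hb; case: (join_lub refl ha hb). Qed.
Lemma join_ubl U (R : U -> U -> Prop) (refl : forall x, R x x) a b :
  DMRS R a -> DMRS R b -> pair_le a (dm_join R a b).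
Proof. move=> ha hb; case: (join_lub refl ha hb) => _ [h _]; apply: h; by left. Qed.
Lemma join_ubr U (R : U -> U -> Prop) (refl : forall x, R x x) a b :
  DMRS R a -> DMRS R b -> pair_le b (dm_join R a b).
Proof. move=> ha hb; case: (join_lub refl ha hb) => _ [h _]; apply: h; by right. Qed.
Lemma join_least U (R : U -> U -> Prop) (refl : forall x, R x x) a b t :
  DMRS R a -> DMRS R b -> DMRS R t -> pair_le a t -> pair_le b t -> pair_le (dm_join R a b) t.
Proof.
move=> ha hb ht h1 h2; case: (join_lub refl ha hb) => _ [_ h]; apply: h => // p [->|->] //.
Qed.

Lemma galois_udia U (R : U -> U -> Prop) (X Y : set U) : udia R X `<=` Y -> X `<=` ibox R Y.
Proof. move=> h x hx y hy; apply: h; by exists x. Qed.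

Lemma meet_glb U (R : U -> U -> Prop) (refl : forall x, R x x) a b :
  DMRS R a -> DMRS R b -> is_glb (DMRS R) (@pair_le U) [set a; b] (dm_meet R a b).
Proof.
move=> ha hb.
have [[X _ eA] [_ [ha3 _]]] := ha.
have [[X' _ eA'] [_ [hb3 _]]] := hb.
split.
  apply: (L_intro refl).
  - exists (X `&` X') => //; rewrite -eA -eA'; apply: seteq => x /=.
      by move=> h; split => y hy; case: (h y hy).
    by move=> [h1 h2] y hy; split; [exact: h1 | exact: h2].
  - exact: rng_udia.
  - apply: udia_mono; apply: galois_udia => x hx; split.
      apply: ha3; apply: udia_mono hx; apply: idia_mono => y []. by [].
    apply: hb3; apply: udia_mono hx; apply: idia_mono => y []. by [].
  - move=> x hs [y [hxy hy]]; have e := S_img refl hs hxy; subst y.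
    have [h1 h2] := ibox_sub refl hy.
    split; [exact: L_S ha hs h1 | exact: L_S hb hs h2].
split.
  move=> p [->|->]; split => x /=.
  - by case.
  - move=> hx; have [h1 _] := udia_ibox hx; exact: h1.
  - by case.
  - move=> hx; have [_ h2] := udia_ibox hx; exact: h2.
move=> t ht hlb.
have [h1 h2] := hlb a (or_introl erefl).
have [h1' h2'] := hlb b (or_intror erefl).
split => x /=.
  by move=> hx; split; [exact: h1 | exact: h1'].
move=> hx; have [_ [hr _]] := ht.
rewrite -(range_udia hr) in hx.
apply: udia_mono hx; apply: ibox_mono => y hy; split; [exact: h2 | exact: h2'].
Qed.

Lemma meet_L U (R : U -> U -> Prop) (refl : forall x, R x x) a b :
  DMRS R a -> DMRS R b -> DMRS R (dm_meet R a b).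
Proof. by move=> ha hb; case: (meet_glb refl ha hb). Qed.
Lemma meet_lbl U (R : U -> U -> Prop) (refl : forall x, R x x) a b :
  DMRS R a -> DMRS R b -> pair_le (dm_meet R a b) a.
Proof. move=> ha hb; case: (meet_glb refl ha hb) => _ [h _]; apply: h; by left. Qed.
Lemma meet_lbr U (R : U -> U -> Prop) (refl : forall x, R x x) a b :
  DMRS R a -> DMRS R b -> pair_le (dm_meet R a b) b.
Proof. move=> ha hb; case: (meet_glb refl ha hb) => _ [h _]; apply: h; by right. Qed.
Lemma meet_great U (R : U -> U -> Prop) (refl : forall x, R x x) a b t :
  DMRS R a -> DMRS R b -> DMRS R t -> pair_le t a -> pair_le t b -> pair_le t (dm_meet R a b).
Proof.
move=> ha hb ht h1 h2; case: (meet_glb refl ha hb) => _ [_ h]; apply: h => // p [->|->] //.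
Qed.

Lemma JJ_L U (R : U -> U -> Prop) j : JJ R j -> DMRS R j.
Proof. by case. Qed.

Lemma prime U (R : U -> U -> Prop) (refl : forall x, R x x) j F :
  completely_distributive (DMRS R) (@pair_le U) ->
  JJ R j -> F `<=` DMRS R -> pair_le j (BJ R F) -> exists f, F f /\ pair_le j f.
Proof.
move=> CD hj hF hle.
have hjL := JJ_L hj.
pose K := fun i : bool => {p : set U * set U | if i then p = j else F p}.
pose x := fun (i : bool) (k : K i) => proj1_sig k.
pose y := fun i : bool => if i then j else BJ R F.
pose z := fun f : (forall i, K i) => dm_meet R j (proj1_sig (f false)).
pose Z := [set t | exists f, t = z f].
have hxL : forall i k, DMRS R (x i k).
  by case => -[p hp] //=; [rewrite hp | exact: hF].
have hZ : Z `<=` DMRS R.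
  move=> t [f ->]; apply: (meet_L refl hjL); exact: (hxL false (f false)).
have e := CD bool K x y j z (BJ R Z) hxL _ _ _ (BJ_lub refl hZ).
have : j = BJ R Z.
  apply: e.
  - case.
    + split => //; split.
        by move=> t [[p hp] ->] /=; rewrite hp; exact: le_refl.
      move=> u hu hub; apply: hub; by exists (exist _ j erefl : K true).
    + have -> : [set t | exists k : K false, t = x false k] = F.
        apply: seteq => t.
          by move=> [[p hp] ->].
        move=> ht; by exists (exist _ t ht : K false).
      exact: (BJ_lub refl hF).
  - split => //; split.
      move=> t [[|] ->] /=; [exact: le_refl | exact: hle].
    move=> u hu hlb; exact: hlb j (ex_intro _ true erefl).
  - move=> f.
    have hft : proj1_sig (f true) = j := proj2_sig (f true).
    have -> : [set t | exists i, t = x i (f i)] = [set j; proj1_sig (f false)].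
      apply: seteq => t.
        move=> [[|] ->]; [left; exact: hft | by right].
      move=> [->|->]; [by exists true | by exists false].
    apply: (meet_glb refl hjL); exact: (hxL false (f false)).
move=> ej.
have hlub : is_lub (DMRS R) (@pair_le U) Z j by rewrite ej; exact: (BJ_lub refl hZ).
have [f ef] := hj.2 Z hZ hlub.
exists (proj1_sig (f false)); split; first exact: (proj2_sig (f false)).
rewrite ef; apply: (meet_lbr refl hjL); exact: (hxL false (f false)).
Qed.

Lemma spatial_le U (R : U -> U -> Prop) a b :
  spatial (DMRS R) (@pair_le U) -> DMRS R a -> DMRS R b ->
  (forall j, JJ R j -> pair_le j a -> pair_le j b) -> pair_le a b.
Proof.
move=> sp ha hb h; have [_ [_ hl]] := sp a ha.
apply: hl => // j [hj hja]; exact: h.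
Qed.

Lemma prime2 U (R : U -> U -> Prop) (refl : forall x, R x x) j a b :
  completely_distributive (DMRS R) (@pair_le U) ->
  JJ R j -> DMRS R a -> DMRS R b -> pair_le j (dm_join R a b) -> pair_le j a \/ pair_le j b.
Proof.
move=> CD hj ha hb; rewrite join_BJ => h.
have [f [[->|->] hf]] := prime refl CD hj (pair_sub ha hb) h; by [left | right].
Qed.

Lemma P_le U (R : U -> U -> Prop) (refl : forall x, R x x) p x :
  DMRS R p -> (pair_le (Pe R x) p <-> p.1 x).
Proof.
move=> hp; have [hr1 [_ [h3 _]]] := hp.
split.
  move=> [h1 _]; apply: h1 => y hy; exact: hy.
move=> hx; split => /=.
  rewrite -(range_ubox hr1); apply: ubox_mono => y hy; by exists x; split.
move=> y [t [hyt hxt]]; apply: h3; exists t; split => //; by exists x; split.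
Qed.

Lemma Pe_self U (R : U -> U -> Prop) x : (Pe R x).1 x.
Proof. by move=> y. Qed.
Arguments Pe_self {U} R x.

Lemma J_gen U (R : U -> U -> Prop) (refl : forall x, R x x) j :
  JJ R j -> (exists x, j = Pe R x) \/ (exists z, j = Ee R z).
Proof.
move=> hj; have hjL := JJ_L hj.
pose F := [set p | (exists x, j.1 x /\ p = Pe R x) \/
                   (exists z, udia R [set z] `<=` j.2 /\ p = Ee R z)].
have hF : F `<=` DMRS R.
  move=> p [[x [_ ->]]|[z [_ ->]]]; [exact: Pe_L | exact: Ee_L].
have hlub : is_lub (DMRS R) (@pair_le U) F j.
  split => //; split.
    move=> p [[x [hx ->]]|[z [hz ->]]]; first by apply/(P_le refl _ hjL).
    split => //= t ht; have [e hs] := ubox1 refl ht; subst t.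
    apply: (L_S hjL hs); apply: hz; apply/udia1; exact: refl.
  move=> u hu hub; split => t ht.
    have : pair_le (Pe R t) u by apply: hub; left; exists t.
    by move/(P_le refl _ hu).
  have [[Y _ eB] _] := hjL.2.
  rewrite -eB in ht; have [w [htw hw]] := ht.
  have hEw : pair_le (Ee R w) u.
    apply: hub; right; exists w; split => //.
    rewrite -eB; apply: udia_mono => v ->. done.
  apply: hEw.2; exact/udia1.
have := hj.2 F hF hlub.
move=> [[x [_ e]]|[z [_ e]]]; by [left; exists x | right; exists z].
Qed.

Lemma lubD U (R : U -> U -> Prop) T X :
  T `<=` range (udia R) -> is_lub (range (udia R)) (@subset U) T X ->
  X = [set t | exists Y, T Y /\ Y t].
Proof.
move=> hT [hX [hub hl]].
have hUr : range (udia R) [set t | exists Y, T Y /\ Y t].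
  exists (ibox R [set t | exists Y, T Y /\ Y t]) => //; apply: seteq; first exact: udia_ibox.
  move=> t [Y [hY ht]]; rewrite -(range_udia (hT Y hY)) in ht.
  apply: udia_mono ht; apply: ibox_mono => v hv; by exists Y.
apply: seteq.
  apply: hl => // Y hY t ht; by exists Y.
move=> t [Y [hY ht]]; exact: hub Y hY t ht.
Qed.

Lemma cjiD_S U (R : U -> U -> Prop) (refl : forall x, R x x) z :
  singletons R z -> cjiD R z.
Proof.
move=> hs; split; first exact: rng_udia.
move=> T hT hl.
have e := lubD hT hl.
have hz : udia R [set z] z by apply/udia1; exact: refl.
rewrite e in hz; have [Y [hY hYz]] := hz.
have [W _ eW] := hT Y hY.
suff -> : udia R [set z] = Y by [].
apply: seteq.
  rewrite -eW in hYz *; have [t [hzt ht]] := hYz.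
  have ezt := S_img refl hs hzt; subst t.
  apply: udia_mono => v ->. done.
rewrite e => t ht; by exists Y.
Qed.

Lemma notS_ubox1 U (R : U -> U -> Prop) (refl : forall x, R x x) z :
  ~ singletons R z -> ubox R [set z] = set0.
Proof.
move=> hs; apply: seteq => // t ht; apply: hs; exact: (ubox1 refl ht).2.
Qed.

Lemma E_J U (R : U -> U -> Prop) (refl : forall x, R x x) z :
  JJ R (Ee R z) <-> cjiD R z.
Proof.
split.
  move=> hj.
  have [hs|hns] := pselect (singletons R z); first exact: cjiD_S.
  split; first exact: rng_udia.
  move=> T hT hl.
  have e := lubD hT hl.
  pose S' : set (set U * set U) := [set p | exists X, T X /\ p = (set0, X)].
  have hS' : S' `<=` DMRS R.
    move=> p [X [hX ->]]; have [Y _ eY] := hT X hX.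
    apply: (L_intro refl).
    - exists set0 => //; apply: seteq => x // hx; exact: hx x (refl x).
    - by exists Y.
    - by move=> x [y [_ [w [_ []]]]].
    - move=> x hxs hX0; exfalso; apply: hns.
      have hxz : udia R [set z] x by rewrite e; exists X.
      move/udia1: hxz => hxz; have := S_img refl hxs hxz => ezx; subst z; exact: hxs.
  have hlub : is_lub (DMRS R) (@pair_le U) S' (Ee R z).
    split; first exact: Ee_L.
    split.
      move=> p [X [hX ->]]; split => //=.
      rewrite e => t ht; by exists X.
    move=> u hu hub; split => /=.
      by rewrite (notS_ubox1 refl hns).
    rewrite e => t [X [hX ht]]; exact: (hub (set0, X) (ex_intro _ X (conj hX erefl))).2 t ht.
  have [X [hX eX]] := hj.2 S' hS' hlub.
  by case: eX => _ ->.
move=> hc; split; first exact: Ee_L.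
move=> S' hS' hl.
pose T := [set X | exists p, S' p /\ X = p.2].
have hT : T `<=` range (udia R).
  by move=> X [p [hp ->]]; have [_ [h _]] := hS' p hp.
have eB := lub_BJ refl hS' hl.
have hlT : is_lub (range (udia R)) (@subset U) T (udia R [set z]).
  split; first exact: rng_udia.
  split.
    move=> X [p [hp ->]]; have [_ [_ h]] := hl; exact: ((hl.2.1 p hp).2).
  move=> Y hY hub; have -> : udia R [set z] = (Ee R z).2 by [].
  rewrite eB => t [p [hp ht]]; apply: (hub p.2) => //; by exists p.
have [p [hp e2]] := hc.2 T hT hlT.
suff -> : Ee R z = p by [].
have hpL := hS' p hp.
have [hp1 hp2] := hl.2.1 p hp.
apply: paireq; split => //=; last by rewrite e2.
move=> t ht; have [et hs] := ubox1 refl ht; subst t.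
apply: (L_S hpL hs); rewrite -e2; apply/udia1; exact: refl.
Qed.

Lemma vmin U (R : U -> U -> Prop) (refl : forall x, R x x) y :
  completely_distributive (DMRS R) (@pair_le U) ->
  JJ R (Ee R y) -> ~ singletons R y ->
  exists v, R v y /\ forall v', R v' y -> Rimg R v `<=` Rimg R v'.
Proof.
move=> CD hj hns; apply: NNP => H.
pose F := [set p | exists v', R v' y /\ p = dm_neg (Pe R v')].
have hF : F `<=` DMRS R.
  move=> p [v' [_ ->]]; apply: neg_L => //; exact: Pe_L.
have hle : pair_le (Ee R y) (BJ R F).
  split => /=.
    by rewrite (notS_ubox1 refl hns).
  move=> t /udia1 hty.
  have [v' [hv' hn]] : exists v', R v' y /\ ~ (Rimg R t `<=` Rimg R v').
    apply: NNP => H2; apply: H; exists t; split => // v' hv'.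
    apply: NNP => H3; apply: H2; by exists v'.
  exists (dm_neg (Pe R v')); split; first by exists v'.
  exact: hn.
have [f [[v' [hv' ->]] hf]] := prime refl CD hj hF hle.
have : (dm_neg (Pe R v')).2 v' by apply: hf.2; apply/udia1.
by apply; exact: Pe_self.
Qed.

Lemma PvJ U (R : U -> U -> Prop) (refl : forall x, R x x) y v :
  ~ singletons R y -> R v y -> (forall v', R v' y -> Rimg R v `<=` Rimg R v') ->
  JJ R (Pe R v).
Proof.
move=> hns hvy hmin; split; first exact: Pe_L.
move=> S' hS' hl; apply: NNP => hn.
have hnegL : DMRS R (dm_neg (Ee R y)) by apply: neg_L => //; exact: Ee_L.
have hle : pair_le (Pe R v) (dm_neg (Ee R y)).
  apply: hl.2.2 => // s hs; have hsL := hS' s hs.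
  have [hs1 hs2] := hl.2.1 s hs.
  split => t /= ht.
    move/udia1 => hty.
    have h1 : Rimg R t `<=` Rimg R v := hs1 t ht.
    have h2 : Rimg R v `<=` Rimg R t := hmin t hty.
    have [[X _ eX] _] := hsL.
    have hv : s.1 v.
      rewrite -eX; rewrite -eX in ht => u hu; exact: ht u (h2 u hu).
    apply: hn; suff <- : s = Pe R v by [].
    apply: paireq; first by split.
    by apply/(P_le refl _ hsL).
  move=> hu; exact: hns (ubox1 refl hu).2.
have := hle.1 v (Pe_self R v).
by apply; apply/udia1.
Qed.

Lemma Hprime U (R : U -> U -> Prop) (refl : forall x, R x x) s :
  spatial (DMRS R) (@pair_le U) -> exists z, R s z /\ cjiD R z.
Proof.
move=> sp.
have [hs|hns] := pselect (singletons R s).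
  exists s; split; [exact: refl | exact: cjiD_S].
have hl := sp (Ee R s) (Ee_L refl s).
have hJb : [set j | cji (DMRS R) (@pair_le U) j /\ pair_le j (Ee R s)] `<=` DMRS R.
  by move=> j [[h _] _].
have e := lub_BJ refl hJb hl.
have : (Ee R s).2 s by apply/udia1; exact: refl.
rewrite e => -[q [[hq hqs] hq2]].
case: (J_gen refl hq) => [[x ex]|[w ew]]; subst q.
  have := hqs.1 x (Pe_self R x) => /(ubox1 refl) [_ hS]; by [].
exists w; split; first by move/udia1: hq2.
by apply/(E_J refl).
Qed.

Lemma E_good U (R : U -> U -> Prop) b v0 z :
  DMRS R b -> b.1 v0 -> R v0 z -> pair_le (Ee R z) b /\ ~ pair_le (Ee R z) (dm_neg b).
Proof.
move=> hb hv0 hz; have [[Y _ eY] [_ [h3 _]]] := hb.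
split; last first.
  move=> [_ h2]; have := h2 v0; apply; [by apply/udia1 | done].
split => t /=.
  move=> ht; rewrite -eY => u hu.
  have e : u = z := ht u hu. subst u.
  rewrite -eY in hv0; exact: hv0 z hz.
move/udia1 => htz; apply: h3; exists z; split => //; by exists v0.
Qed.

Definition cond_ii U (R : U -> U -> Prop) :=
  forall x y : U, ~ singletons R x -> ~ singletons R y ->
      cji (range (udia R)) (@subset U) (udia R [set x]) ->
      cji (range (udia R)) (@subset U) (udia R [set y]) ->
      (exists u : U, udia R [set x] `<=` udia R [set u] /\
                     udia R [set y] `<=` udia R [set u]) ->
      exists z : U, cji (range (udia R)) (@subset U) (udia R [set z]) /\
                    udia R [set x] `<=` udia R [set z] /\
                    udia R [set y] `<=` udia R [set z].

Lemma B_core U (R : U -> U -> Prop) (refl : forall x, R x x) a b j k :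
  completely_distributive (DMRS R) (@pair_le U) ->
  spatial (DMRS R) (@pair_le U) -> cond_ii R ->
  DMRS R a -> DMRS R b -> JJ R j -> JJ R k ->
  pair_le j a -> ~ pair_le j (dm_neg a) -> pair_le k j -> pair_le k b ->
  ~ pair_le k (dm_neg b) -> pair_le k (dm_neg a) ->
  exists k', JJ R k' /\ pair_le k k' /\ pair_le k' j /\ pair_le k' b /\
             ~ pair_le k' (dm_neg a) /\ ~ pair_le k' (dm_neg b).
Proof.
move=> CD sp H2 ha hb hj hk hja hjna hkj hkb hknb hkna.
have hka := le_trans hkj hja.
case: (J_gen refl hk) => [[x' ex]|[w ew]]; subst k.
  exfalso; have hx' : a.1 x' by apply/(P_le refl _ ha).
  apply: (hkna.1 x' (Pe_self R x')); exact: (L_sub refl ha) x' hx'.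
have hw1 : forall t, R t w -> ~ a.1 t.
  move=> t htw; apply: hkna.2; exact/udia1.
have hnS : ~ singletons R w.
  move=> hS; have := hka.1 w (ubox1_S refl hS); apply: hw1; exact: refl.
have [v0 [hv0w hv0b]] : exists v0, R v0 w /\ b.1 v0.
  apply: NNP => H; apply: hknb; split => /=.
    by rewrite (notS_ubox1 refl hnS).
  move=> t /udia1 htw hb1; apply: H; by exists t.
have hcw : cjiD R w by apply/(E_J refl).
case: (J_gen refl hj) => [[x ex]|[z ez]]; subst j; last first.
  have hv0z : R v0 z by apply/udia1; apply: hkj.2; exact/udia1.
  have [h1 h2] := E_good hb hv0b hv0z.
  exists (Ee R z); do !split => //.
have hxa : a.1 x by apply/(P_le refl _ ha).
pose F := [set p | exists t, R x t /\ p = Ee R t].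
have hF : F `<=` DMRS R by move=> p [t [_ ->]]; exact: Ee_L.
have hle : pair_le (Ee R w) (BJ R F).
  split => /=; first by rewrite (notS_ubox1 refl hnS).
  move=> t htw; have [s [hts hxs]] := hkj.2 t htw.
  exists (Ee R s); split; first by exists s.
  exact/udia1.
have [p [[t [hxt ->]] hwt]] := prime refl CD hk hF hle.
have [z [hxz [hcz hwz]]] : exists z, R x z /\ cjiD R z /\ udia R [set w] `<=` udia R [set z].
  have [hSt|hnSt] := pselect (singletons R t).
    exists t; split => //; split; [exact: cjiD_S | exact: hwt.2].
  have hl := sp (Ee R t) (Ee_L refl t).
  have hJb : [set j | cji (DMRS R) (@pair_le U) j /\ pair_le j (Ee R t)] `<=` DMRS R.
    by move=> j [[h _] _].
  have e := lub_BJ refl hJb hl.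
  have : (Ee R t).2 x by apply/udia1.
  rewrite e => -[q [[hq hqt] hq2]].
  case: (J_gen refl hq) => [[x'' ex]|[y ey]]; subst q.
    exfalso; have := hqt.1 x'' (Pe_self R x'') => /(ubox1 refl) [_ hS]; by [].
  have hcy : cjiD R y by apply/(E_J refl).
  have hyt : udia R [set y] `<=` udia R [set t] := hqt.2.
  have hnSy : ~ singletons R y.
    move=> hSy; apply: hnSt.
    have : udia R [set t] y by apply: hyt; apply/udia1; exact: refl.
    move/udia1 => hyt'; have ety := S_img refl hSy hyt'; subst t; exact: hSy.
  have [z [hcz [hwz hyz]]] := H2 w y hnS hnSy hcw hcy (ex_intro _ t (conj hwt.2 hyt)).
  exists z; split; last by split.
  by have := hyz x hq2; move/udia1.
have hv0z : R v0 z by have := hwz v0 (proj2 (udia1 R w v0) hv0w); move/udia1.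
have [h1 h2] := E_good hb hv0b hv0z.
exists (Ee R z); split; first by apply/(E_J refl).
split.
  split => /=; [by rewrite (notS_ubox1 refl hnS) | exact: hwz].
split.
  split => u /=.
    move=> hu v hv; have e : v = z := hu v hv. by subst v.
  move/udia1 => huz; by exists z.
split => //; split => //.
move=> [_ hn]; have := hn x; apply; [exact/udia1 | done].
Qed.

Lemma neg_join U (R : U -> U -> Prop) a b :
  dm_neg (dm_join R a b) = dm_meet R (dm_neg a) (dm_neg b).
Proof. by rewrite /dm_neg /dm_join /dm_meet /= setCU C_ubox C_idia setCU. Qed.

Lemma neg_meet U (R : U -> U -> Prop) a b :
  dm_neg (dm_meet R a b) = dm_join R (dm_neg a) (dm_neg b).
Proof. by rewrite /dm_neg /dm_join /dm_meet /= setCI C_udia C_ibox setCI. Qed.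

Lemma distr U (R : U -> U -> Prop) (refl : forall x, R x x) a b c :
  completely_distributive (DMRS R) (@pair_le U) -> spatial (DMRS R) (@pair_le U) ->
  DMRS R a -> DMRS R b -> DMRS R c ->
  dm_meet R a (dm_join R b c) = dm_join R (dm_meet R a b) (dm_meet R a c).
Proof.
move=> CD sp ha hb hc.
have hbc := join_L refl hb hc.
have hab := meet_L refl ha hb; have hac := meet_L refl ha hc.
have hl := meet_L refl ha hbc; have hr := join_L refl hab hac.
apply: paireq; apply: (spatial_le sp) => // j hj hjle; have hjL := JJ_L hj.
  have hja := le_trans hjle (meet_lbl refl ha hbc).
  have hjbc := le_trans hjle (meet_lbr refl ha hbc).
  case: (prime2 refl CD hj hb hc hjbc) => h.
    apply: le_trans (join_ubl refl hab hac); exact: meet_great.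
  apply: le_trans (join_ubr refl hab hac); exact: meet_great.
case: (prime2 refl CD hj hab hac hjle) => h.
  apply: meet_great => //; first exact: le_trans h (meet_lbl refl ha hb).
  apply: le_trans (join_ubl refl hb hc); exact: le_trans h (meet_lbr refl ha hb).
apply: meet_great => //; first exact: le_trans h (meet_lbl refl ha hc).
apply: le_trans (join_ubr refl hb hc); exact: le_trans h (meet_lbr refl ha hc).
Qed.

Lemma kleene U (R : U -> U -> Prop) (refl : forall x, R x x) :
  completely_distributive (DMRS R) (@pair_le U) -> spatial (DMRS R) (@pair_le U) ->
  is_Kleene_DM R.
Proof.
move=> CD sp; rewrite /is_Kleene_DM.
split; first exact: bot_L.
split; first exact: top_L.
split; first by move=> a ha; split; split => x //.
split; first by move=> a b ha hb; exact: join_lub.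
split; first by move=> a b ha hb; exact: meet_glb.
split; first by move=> a b c ha hb hc; exact: distr.
split; first by move=> a ha; exact: neg_L.
split; first by move=> a ha; exact: negK.
split; first by move=> a b ha hb; exact: neg_join.
split; first by move=> a b ha hb; exact: neg_meet.
move=> a b ha hb; split => x /=.
  move=> [h1 h2]; exfalso; apply: h2; exact: (L_sub refl ha) x h1.
move=> _; have [h|h] := pselect (b.1 x); [left; exact: (L_sub refl hb) x h | by right].
Qed.

Lemma rpc_exists U (R : U -> U -> Prop) (refl : forall x, R x x) a c :
  completely_distributive (DMRS R) (@pair_le U) -> spatial (DMRS R) (@pair_le U) ->
  DMRS R a -> DMRS R c -> exists x, is_rpc R a c x.
Proof.
move=> CD sp ha hc.
pose F := [set y | DMRS R y /\ pair_le (dm_meet R a y) c].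
have hF : F `<=` DMRS R by move=> y [].
have hx := BJ_L refl hF.
exists (BJ R F); split => //; split.
  apply: (spatial_le sp) => //; first exact: meet_L.
  move=> j hj hjle; have hjL := JJ_L hj.
  have hja := le_trans hjle (meet_lbl refl ha hx).
  have hjx := le_trans hjle (meet_lbr refl ha hx).
  have [f [[hfL hf] hjf]] := prime refl CD hj hF hjx.
  apply: le_trans hf; exact: meet_great.
move=> y hy hyle; exact: (BJ_lub refl hF).2.1 y (conj hy hyle).
Qed.

Lemma nelson_eq U (R : U -> U -> Prop) (refl : forall x, R x x) a b c u v w :
  completely_distributive (DMRS R) (@pair_le U) -> spatial (DMRS R) (@pair_le U) -> cond_ii R ->
  DMRS R a -> DMRS R b -> DMRS R c ->
  is_rpc R (dm_meet R a b) (dm_join R (dm_neg (dm_meet R a b)) c) u ->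
  is_rpc R b (dm_join R (dm_neg b) c) v ->
  is_rpc R a (dm_join R (dm_neg a) v) w ->
  u = w.
Proof.
move=> CD sp H2 ha hb hc [hu [hu1 hu2]] [hv [hv1 hv2]] [hw [hw1 hw2]].
have hab := meet_L refl ha hb.
have hna := neg_L refl ha; have hnb := neg_L refl hb; have hnab := neg_L refl hab.
have heu := join_L refl hnab hc.
have hev := join_L refl hnb hc.
have hew := join_L refl hna hv.
have la := le_trans (meet_lbl refl hab hu) (meet_lbl refl ha hb).
have lb := le_trans (meet_lbl refl hab hu) (meet_lbr refl ha hb).
have na_nab : pair_le (dm_neg a) (dm_neg (dm_meet R a b)) by apply: neg_anti; exact: meet_lbl.
have nb_nab : pair_le (dm_neg b) (dm_neg (dm_meet R a b)) by apply: neg_anti; exact: meet_lbr.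
apply: paireq.
- apply: hw2 => //.
  apply: (spatial_le sp) => //; first exact: meet_L.
  move=> k hk hkle; have hkL := JJ_L hk.
  have hka := le_trans hkle (meet_lbl refl ha hu).
  have hku := le_trans hkle (meet_lbr refl ha hu).
  have [hkna|hnkna] := pselect (pair_le k (dm_neg a)).
    exact: le_trans hkna (join_ubl refl hna hv).
  apply: le_trans (join_ubr refl hna hv).
  apply: hv2 => //.
  apply: (spatial_le sp) => //; first exact: meet_L.
  move=> k2 hk2 hk2le; have hk2L := JJ_L hk2.
  have hk2b := le_trans hk2le (meet_lbl refl hb hkL).
  have hk2k := le_trans hk2le (meet_lbr refl hb hkL).
  have hk2a := le_trans hk2k hka.
  have hk2u := le_trans hk2k hku.
  have hk2m : pair_le k2 (dm_meet R (dm_meet R a b) u).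
    apply: meet_great => //; exact: meet_great.
  have hk2eu := le_trans hk2m hu1.
  case: (prime2 refl CD hk2 hnab hc hk2eu) => hk2c; last first.
    exact: le_trans hk2c (join_ubr refl hnb hc).
  rewrite neg_meet in hk2c.
  case: (prime2 refl CD hk2 hna hnb hk2c) => hk2n; last first.
    exact: le_trans hk2n (join_ubl refl hnb hc).
  have [hk2nb|hnk2nb] := pselect (pair_le k2 (dm_neg b)).
    exact: le_trans hk2nb (join_ubl refl hnb hc).
  have [k' [hk' [hk2k' [hk'k [hk'b [hk'na hk'nb]]]]]] :=
    B_core refl CD sp H2 ha hb hk hk2 hka hnkna hk2k hk2b hnk2nb hk2n.
  have hk'L := JJ_L hk'.
  have hk'm : pair_le k' (dm_meet R (dm_meet R a b) u).
    apply: meet_great => //; last exact: le_trans hk'k hku.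
    apply: meet_great => //; exact: le_trans hk'k hka.
  case: (prime2 refl CD hk' hnab hc (le_trans hk'm hu1)) => hk'c.
    rewrite neg_meet in hk'c.
    by case: (prime2 refl CD hk' hna hnb hk'c).
  apply: le_trans (join_ubr refl hnb hc); exact: le_trans hk2k' hk'c.
- apply: hu2 => //.
  apply: (spatial_le sp) => //; first exact: meet_L.
  move=> k hk hkle; have hkL := JJ_L hk.
  have hkab := le_trans hkle (meet_lbl refl hab hw).
  have hkw := le_trans hkle (meet_lbr refl hab hw).
  have hka := le_trans hkab (meet_lbl refl ha hb).
  have hkb := le_trans hkab (meet_lbr refl ha hb).
  have hkaw : pair_le k (dm_meet R a w) by exact: meet_great.
  case: (prime2 refl CD hk hna hv (le_trans hkaw hw1)) => h.
    apply: le_trans (join_ubl refl hnab hc); exact: le_trans h na_nab.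
  have hkbv : pair_le k (dm_meet R b v) by exact: meet_great.
  case: (prime2 refl CD hk hnb hc (le_trans hkbv hv1)) => h2.
    apply: le_trans (join_ubl refl hnab hc); exact: le_trans h2 nb_nab.
  exact: le_trans h2 (join_ubr refl hnab hc).
Qed.

Lemma A_dir U (R : U -> U -> Prop) (refl : forall x, R x x) :
  completely_distributive (DMRS R) (@pair_le U) -> spatial (DMRS R) (@pair_le U) ->
  is_Nelson_DM R -> cond_ii R.
Proof.
move=> CD sp [hK [hex heq]] x y hnx hny hcx hcy [u [hxu hyu]].
apply: NNP => hnz.
have hJx : JJ R (Ee R x) by apply/(E_J refl).
have hJy : JJ R (Ee R y) by apply/(E_J refl).
have [vx [hvx hminx]] := vmin refl CD hJx hnx.
have [vy [hvy hminy]] := vmin refl CD hJy hny.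
have hJa : JJ R (Pe R vy) := PvJ refl hny hvy hminy.
set a := Pe R vy. set b := Pe R vx. set c := dm_bot U.
have ha : DMRS R a := Pe_L refl vy.
have hb : DMRS R b := Pe_L refl vx.
have hc : DMRS R c := bot_L refl.
have key : forall s, Rimg R s `<=` Rimg R vx -> Rimg R s `<=` Rimg R vy -> False.
  move=> s h1 h2; have [z [hsz hcz]] := Hprime refl s sp.
  apply: hnz; exists z; split => //; split => t /udia1 ht; apply/udia1.
    exact: hminx t ht z (h1 z hsz).
  exact: hminy t ht z (h2 z hsz).
have claim1 : forall k, JJ R k -> pair_le k a -> pair_le k b ->
    pair_le k (dm_neg a) \/ pair_le k (dm_neg b).
  move=> k hk hka hkb; apply: NNP => hn.
  have hna : ~ pair_le k (dm_neg a) by move=> h; apply: hn; left.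
  have hnb : ~ pair_le k (dm_neg b) by move=> h; apply: hn; right.
  case: (J_gen refl hk) => [[s es]|[w ew]]; subst k.
    apply: (key s); [exact: hkb.1 s (Pe_self R s) | exact: hka.1 s (Pe_self R s)].
  have [hSw|hnSw] := pselect (singletons R w).
    have hw := ubox1_S refl hSw.
    apply: (key w); [exact: hkb.1 w hw | exact: hka.1 w hw].
  have [vw [hvw hminw]] := vmin refl CD hk hnSw.
  have ex1 : forall d, d = a \/ d = b -> ~ pair_le (Ee R w) (dm_neg d) ->
      exists p, R p w /\ d.1 p.
    move=> d _ hnd; apply: NNP => H; apply: hnd; split => /=.
      by rewrite (notS_ubox1 refl hnSw).
    move=> t /udia1 htw hd; apply: H; by exists t.
  have [p1 [hp1 hp1a]] := ex1 a (or_introl erefl) hna.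
  have [p2 [hp2 hp2b]] := ex1 b (or_intror erefl) hnb.
  apply: (key vw).
    move=> t ht; exact: hp2b t (hminw p2 hp2 t ht).
  move=> t ht; exact: hp1a t (hminw p1 hp1 t ht).
have [v hv] := hex b c hb hc.
have hvL : DMRS R v by case: hv.
have [wN hwN] := hex a v ha hvL.
have hab := meet_L refl ha hb.
have [uN huN] := hex (dm_meet R a b) c hab hc.
have e := heq a b c uN v wN ha hb hc huN hv hwN.
have hau : pair_le a uN.
  case: huN => huL [_ hu2]; apply: hu2 => //.
  have hnab := neg_L refl hab.
  apply: (spatial_le sp) => //; first exact: meet_L.
  - apply: join_L => //.
  move=> k hk hkle; have hkL := JJ_L hk.
  have hkab := le_trans hkle (meet_lbl refl hab ha).
  have hka := le_trans hkab (meet_lbl refl ha hb).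
  have hkb := le_trans hkab (meet_lbr refl ha hb).
  apply: le_trans (join_ubl refl hnab hc).
  case: (claim1 k hk hka hkb) => h.
    apply: le_trans h _; apply: neg_anti; exact: meet_lbl.
  apply: le_trans h _; apply: neg_anti; exact: meet_lbr.
rewrite e in hau.
case: hwN => hwL [hw1 _].
have hna := neg_L refl ha.
have haa : pair_le a (dm_meet R a wN) by apply: meet_great => //; exact: le_refl.
case: (prime2 refl CD hJa hna hvL (le_trans haa hw1)) => h.
  apply: (h.1 vy (Pe_self R vy)); exists vy; split; exact: refl.
have hxb : pair_le (Ee R x) b.
  split => /=; first by rewrite (notS_ubox1 refl hnx).
  move=> t /udia1 htx; by exists x.
have hxa : pair_le (Ee R x) a.
  split => /=; first by rewrite (notS_ubox1 refl hnx).
  move=> t /udia1 htx; exists u; split.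
    by apply/udia1; apply: hxu; apply/udia1.
  by apply/udia1; apply: hyu; apply/udia1.
have hxL := Ee_L refl x.
have hxba : pair_le (Ee R x) (dm_meet R b a) by exact: meet_great.
have hxbv : pair_le (Ee R x) (dm_meet R b v).
  apply: le_trans hxba _; apply: meet_great => //; first exact: meet_L.
    exact: meet_lbl.
  exact: le_trans (meet_lbr refl hb ha) h.
case: hv => _ [hv1 _].
have := (le_trans hxbv hv1).2 vx; case.
- by apply/udia1.
- by move=> /= hn; apply: hn; exact: Pe_self.
- by [].
Qed.

Unset Implicit Arguments.

Theorem mainTheorem1 (U : Type) (R : U -> U -> Prop) :
  (forall x, R x x) ->
  completely_distributive (DMRS R) (@pair_le U) ->
  spatial (DMRS R) (@pair_le U) ->
  (is_Nelson_DM R <->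
   (forall x y : U, ~ singletons R x -> ~ singletons R y ->
      cji (range (udia R)) (@subset U) (udia R [set x]) ->
      cji (range (udia R)) (@subset U) (udia R [set y]) ->
      (exists u : U, udia R [set x] `<=` udia R [set u] /\
                     udia R [set y] `<=` udia R [set u]) ->
      exists z : U, cji (range (udia R)) (@subset U) (udia R [set z]) /\
                    udia R [set x] `<=` udia R [set z] /\
                    udia R [set y] `<=` udia R [set z])).
Proof.
move=> refl CD sp; split.
  exact: A_dir.
move=> H2; split; first exact: kleene.
split.
  move=> a b ha hb; apply: rpc_exists => //; apply: join_L => //; exact: neg_L.
move=> a b c u v w ha hb hc hu hv hw; exact: nelson_eq hu hv hw.
Qed.
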